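(* Let $Y$ be a compact metric space with more than one point and let $g\colon Y\to Y$ be a topologically mixing TA-map. Then there exist $\varepsilon>0$, $k\in\mathbb N$ and a dense Mycielski set $T\subset Y$ with $g^k(T)\subset T$ which is syndetically $\varepsilon$-scrambled for $g$.
   Context: A continuous surjection $g\colon Y\to Y$ is c-expansive with constant $\beta>0$ if for any two full orbits $(x_i)_{i\in\mathbb Z},(y_i)_{i\in\mathbb Z}$ ($g(x_i)=x_{i+1}$, $g(y_i)=y_{i+1}$) with $x_0\ne y_0$ there is $n\in\mathbb Z$ with $d(x_n,y_n)>\beta$. $g$ has the shadowing property if for every $\varepsilon>0$ there is $\delta>0$ such that every sequence $(x_i)_{i\ge0}$ with $d(g(x_i),x_{i+1})<\delta$ for all $i$ is $\varepsilon$-traced by some $z$, i.e. $d(g^i(z),x_i)<\varepsilon$ for all $i\ge0$. A TA-map is a c-expansive continuous surjection with shadowing. Mixing: $\{n: g^n(U)\cap V\neq\emptyset\}$ cofinite for all nonempty open $U,V$. Syndetic: subset of $\mathbb N$ meeting every set with arbitrarily long runs of consecutive integers. Syndetically $\varepsilon$-scrambled set: at least two points, every pair of distinct points $x,y$ satisfies $\{n:d(g^nx,g^ny)<\eta\}$ syndetic for all $\eta>0$, $d(g^nx,g^ny)\not\to0$, and $\limsup_n d(g^nx,g^ny)\ge\varepsilon$. Mycielski set: countable union of Cantor sets. *)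

(* Defs.v *)
From Stdlib Require Import Reals ZArith List.
Open Scope R_scope.

Section Dyn.
Context {Y : Type} (d : Y -> Y -> R).

Definition is_metric : Prop :=
  (forall x y, 0 <= d x y) /\
  (forall x y, d x y = 0 <-> x = y) /\
  (forall x y, d x y = d y x) /\
  (forall x y z, d x z <= d x y + d y z).

Definition is_open (U : Y -> Prop) : Prop :=
  forall x, U x -> exists r, r > 0 /\ forall y, d x y < r -> U y.

Definition is_compact_space : Prop :=
  forall (I : Type) (U : I -> Y -> Prop),
    (forall i, is_open (U i)) -> (forall y, exists i, U i y) ->
    exists l : list I, forall y, exists i, In i l /\ U i y.

Definition continuous_map (g : Y -> Y) : Prop :=
  forall x eps, eps > 0 -> exists delta, delta > 0 /\
    forall y, d x y < delta -> d (g x) (g y) < eps.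

Definition surjective_map (g : Y -> Y) : Prop := forall y, exists x, g x = y.

Definition full_orbit (g : Y -> Y) (x : Z -> Y) : Prop :=
  forall i : Z, g (x i) = x (i + 1)%Z.

Definition c_expansive (g : Y -> Y) (beta : R) : Prop :=
  beta > 0 /\
  forall x y : Z -> Y, full_orbit g x -> full_orbit g y -> x 0%Z <> y 0%Z ->
    exists n : Z, d (x n) (y n) > beta.

Definition has_shadowing (g : Y -> Y) : Prop :=
  forall eps, eps > 0 -> exists delta, delta > 0 /\
    forall x : nat -> Y, (forall i, d (g (x i)) (x (S i)) < delta) ->
      exists z, forall i, d (Nat.iter i g z) (x i) < eps.

Definition TA_map (g : Y -> Y) : Prop :=
  continuous_map g /\ surjective_map g /\
  (exists beta, c_expansive g beta) /\ has_shadowing g.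

Definition mixing (g : Y -> Y) : Prop :=
  forall U V : Y -> Prop, is_open U -> is_open V ->
    (exists u, U u) -> (exists v, V v) ->
    exists N : nat, forall n, (n >= N)%nat -> exists u, U u /\ V (Nat.iter n g u).

Definition syndetic (S : nat -> Prop) : Prop :=
  forall A : nat -> Prop,
    (forall L : nat, exists m : nat, forall i, (i < L)%nat -> A (m + i)%nat) ->
    exists n, S n /\ A n.

Definition syndetically_scrambled (g : Y -> Y) (eps : R) (T : Y -> Prop) : Prop :=
  (exists a b, T a /\ T b /\ a <> b) /\
  forall x y, T x -> T y -> x <> y ->
    (forall eta, eta > 0 ->
       syndetic (fun n => d (Nat.iter n g x) (Nat.iter n g y) < eta)) /\
    ~ Un_cv (fun n => d (Nat.iter n g x) (Nat.iter n g y)) 0 /\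
    (* limsup_n d(g^n x, g^n y) >= eps *)
    (forall delta, delta > 0 -> forall N : nat, exists n, (n >= N)%nat /\
       d (Nat.iter n g x) (Nat.iter n g y) > eps - delta).

(* Cantor space 2^N with the product topology *)
Definition agree_upto (n : nat) (w w' : nat -> bool) : Prop :=
  forall i, (i < n)%nat -> w i = w' i.

Definition cantor_set (C : Y -> Prop) : Prop :=
  exists h : (nat -> bool) -> Y,
    (forall w, C (h w)) /\
    (forall y, C y -> exists w, h w = y) /\
    (forall w w', h w = h w' -> w = w') /\
    (forall w eps, eps > 0 -> exists n, forall w', agree_upto n w w' ->
        d (h w) (h w') < eps) /\
    (forall w n, exists delta, delta > 0 /\ forall w', d (h w) (h w') < delta ->
        agree_upto n w w').

Definition mycielski (T : Y -> Prop) : Prop :=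
  exists C : nat -> (Y -> Prop), (forall k, cantor_set (C k)) /\
    forall y, T y <-> exists k, C k y.

Definition dense (T : Y -> Prop) : Prop :=
  forall x r, r > 0 -> exists y, d x y < r /\ T y.

End Dyn.

(* Main.v *)
Require Import Defs.
From Stdlib Require Import Reals ZArith List Lia Lra Cantor Arith.
From Stdlib Require Import ClassicalEpsilon Classical FunctionalExtensionality Bool.
Open Scope nat_scope.

Lemma good_point (cs : nat -> nat) (R T0 J0 : nat) :
  (forall j j', (j < j')%nat -> cs j < cs j') ->
  (forall j, (j >= J0)%nat -> cs j + 4 * R + 4 <= cs (S j)) -> cs J0 + R < T0 ->
  forall m, exists t, m <= t < m + T0 + 2 * R + 2 /\ T0 <= t /\ forall j, t + R < cs j \/ cs j + R < t.
Proof.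
  intros Hmono Hgap HT0 m.
  assert (Hmono' : forall j j', j <= j' -> cs j <= cs j').
  { intros j j' h. destruct (Nat.eq_dec j j'); [subst; lia|]. specialize (Hmono j j' ltac:(lia)). lia. }
  assert (Hgap' : forall j j', J0 <= j -> j < j' -> cs j + 4 * R + 4 <= cs j').
  { intros j j' h1 h2. specialize (Hgap j h1). specialize (Hmono' (S j) j' h2). lia. }
  destruct (classic (forall j, m + T0 + R < cs j \/ cs j + R < m + T0)) as [Hg|Hb].
  - exists (m + T0). split; [lia|]. split; [lia|]. exact Hg.
  - apply not_all_ex_not in Hb as [j Hj].
    assert (Hj' : cs j <= m + T0 + R /\ m + T0 <= cs j + R) by lia.
    assert (hjJ : J0 < j).
    { destruct (Nat.lt_ge_cases J0 j) as [h|h]; [exact h|]. specialize (Hmono' j J0 h). lia. }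
    exists (cs j + R + 1). split; [lia|]. split; [lia|].
    intros j'. destruct (Nat.lt_trichotomy j' j) as [h|[h|h]].
    + right. destruct (Nat.lt_ge_cases j' J0) as [h2|h2].
      * specialize (Hmono j' J0 h2). lia.
      * specialize (Hgap' j' j h2 h). lia.
    + subst. right. lia.
    + left. specialize (Hgap' j j' ltac:(lia) h). lia.
Qed.

Open Scope R_scope.

Section Basics.
Context {Y : Type} (d : Y -> Y -> R) (hmet : is_metric d).

Lemma d_nn x y : 0 <= d x y. Proof. apply (proj1 hmet). Qed.
Lemma d_refl x : d x x = 0. Proof. apply (proj1 (proj2 hmet)). reflexivity. Qed.
Lemma d_eq x y : d x y = 0 -> x = y. Proof. apply (proj1 (proj2 hmet)). Qed.
Lemma d_sym x y : d x y = d y x. Proof. apply (proj1 (proj2 (proj2 hmet))). Qed.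
Lemma d_tri x y z : d x z <= d x y + d y z. Proof. apply (proj2 (proj2 (proj2 hmet))). Qed.

Lemma ball_open c r : is_open d (fun y => d c y < r).
Proof.
  intros x Hx. exists (r - d c x). split; [lra|].
  intros y Hy. pose proof (d_tri c x y). lra.
Qed.

Definition conv (s : nat -> Y) (y : Y) : Prop :=
  forall eps, eps > 0 -> exists N, forall n, (n >= N)%nat -> d (s n) y < eps.

Lemma conv_le s s' y y' c :
  conv s y -> conv s' y' -> (exists N, forall n, (n >= N)%nat -> d (s n) (s' n) <= c) ->
  d y y' <= c.
Proof.
  intros H1 H2 [N HN].
  destruct (Rle_dec (d y y') c) as [h|h]; [exact h|exfalso].
  set (e := (d y y' - c) / 2).
  destruct (H1 e) as [N1 HN1]; [unfold e; lra|].
  destruct (H2 e) as [N2 HN2]; [unfold e; lra|].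
  set (n := (N + N1 + N2)%nat).
  specialize (HN n ltac:(unfold n; lia)). specialize (HN1 n ltac:(unfold n; lia)).
  specialize (HN2 n ltac:(unfold n; lia)).
  pose proof (d_tri y (s n) y'). pose proof (d_tri (s n) (s' n) y').
  rewrite (d_sym y (s n)) in H. unfold e in *. lra.
Qed.

Lemma conv_ge s s' y y' c :
  conv s y -> conv s' y' -> (exists N, forall n, (n >= N)%nat -> c <= d (s n) (s' n)) ->
  c <= d y y'.
Proof.
  intros H1 H2 [N HN].
  destruct (Rle_dec c (d y y')) as [h|h]; [exact h|exfalso].
  set (e := (c - d y y') / 2).
  destruct (H1 e) as [N1 HN1]; [unfold e; lra|].
  destruct (H2 e) as [N2 HN2]; [unfold e; lra|].
  set (n := (N + N1 + N2)%nat).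
  specialize (HN n ltac:(unfold n; lia)). specialize (HN1 n ltac:(unfold n; lia)).
  specialize (HN2 n ltac:(unfold n; lia)).
  pose proof (d_tri (s n) y (s' n)). pose proof (d_tri y y' (s' n)).
  rewrite (d_sym y' (s' n)) in H0. unfold e in *. lra.
Qed.

Lemma conv_const_le s y z c :
  conv s y -> (exists N, forall n, (n >= N)%nat -> d (s n) z <= c) -> d y z <= c.
Proof.
  intros H1 H2. apply (conv_le s (fun _ => z) y z c H1).
  - intros e he. exists O. intros n _. rewrite d_refl. lra.
  - exact H2.
Qed.

Lemma conv_unique s y y' : conv s y -> conv s y' -> y = y'.
Proof.
  intros H1 H2. apply d_eq. apply Rle_antisym; [|apply d_nn].
  apply (conv_le s s y y' 0 H1 H2). exists O. intros. rewrite d_refl. lra.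
Qed.

Lemma conv_ext s s' y : conv s y -> (exists N, forall n, (n >= N)%nat -> s n = s' n) -> conv s' y.
Proof.
  intros H [N HN] e he. destruct (H e he) as [N1 HN1]. exists (N + N1)%nat.
  intros n hn. rewrite <- HN by lia. apply HN1. lia.
Qed.

Lemma conv_sub s y (phi : nat -> nat) : conv s y ->
  (forall N, exists N', forall n, (n >= N')%nat -> (phi n >= N)%nat) -> conv (fun n => s (phi n)) y.
Proof.
  intros H Hphi e he. destruct (H e he) as [N HN]. destruct (Hphi N) as [N' HN'].
  exists N'. intros n hn. apply HN. apply HN'. exact hn.
Qed.

Lemma conv_map (f : Y -> Y) s y :
  (forall eps, eps > 0 -> exists delta, delta > 0 /\ forall z, d y z < delta -> d (f y) (f z) < eps) ->
  conv s y -> conv (fun n => f (s n)) (f y).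
Proof.
  intros Hf H e he. destruct (Hf e he) as [dl [hdl Hdl]].
  destruct (H dl hdl) as [N HN]. exists N. intros n hn.
  rewrite d_sym. apply Hdl. rewrite d_sym. apply HN. exact hn.
Qed.

Fixpoint lmax (l : list nat) : nat := match l with nil => O | a :: l' => Nat.max a (lmax l') end.
Lemma lmax_in l a : In a l -> (a <= lmax l)%nat.
Proof. induction l; simpl; intros H; [contradiction|]. destruct H; subst; [lia|]. specialize (IHl H). lia. Qed.

Context (hcpt : is_compact_space d).

Lemma cluster (s : nat -> Y) : exists y, forall r, r > 0 -> forall N, exists n, (n >= N)%nat /\ d (s n) y < r.
Proof.
  apply NNPP. intros Hno.
  set (U := fun (i : Y * R * nat) (z : Y) =>
     let '(y, r, N) := i in r > 0 /\ d y z < r /\ forall n, (n >= N)%nat -> 2 * r <= d (s n) y).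
  destruct (hcpt _ U) as [l Hl].
  - intros [[y r] N] x Hx. simpl in Hx. destruct Hx as [hr [hyx hn]].
    exists (r - d y x). split; [lra|]. intros z hz. simpl. split; [lra|]. split; [|exact hn].
    pose proof (d_tri y x z). lra.
  - intros z. apply NNPP. intros Hz. apply Hno. exists z. intros r hr N.
    apply NNPP. intros H2. apply Hz. exists (z, r/2, N). simpl. split; [lra|]. split.
    + rewrite d_refl. lra.
    + intros n hn. apply Rnot_lt_le. intros hlt. apply H2. exists n. split; [exact hn|]. lra.
  - set (N := lmax (map (fun i : Y * R * nat => let '(_, _, N) := i in N) l)).
    destruct (Hl (s N)) as [[[y r] N0] [hin hU]]. simpl in hU. destruct hU as [hr [hys hn]].
    assert (N0 <= N)%nat.
    { unfold N. apply lmax_in. apply (in_map (fun i : Y * R * nat => let '(_, _, N) := i in N)) in hin. exact hin. }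
    specialize (hn N H). rewrite d_sym in hys. lra.
Qed.

Lemma cauchy_conv (s : nat -> Y) :
  (forall eps, eps > 0 -> exists N, forall n m, (n >= N)%nat -> (m >= N)%nat -> d (s n) (s m) < eps) ->
  exists y, conv s y.
Proof.
  intros Hc. destruct (cluster s) as [y Hy]. exists y. intros e he.
  destruct (Hc (e/2)) as [N HN]; [lra|]. exists N. intros n hn.
  destruct (Hy (e/2) ltac:(lra) N) as [m [hm hd]].
  specialize (HN n m hn hm). pose proof (d_tri (s n) (s m) y). lra.
Qed.

Lemma seq_compact (s : nat -> Y) : exists phi : nat -> nat, (forall n, (phi n < phi (S n))%nat) /\
   exists y, conv (fun n => s (phi n)) y.
Proof.
  destruct (cluster s) as [y Hy].
  assert (Hp : forall N : nat, forall n : nat, {m : nat | (m >= N)%nat /\ d (s m) y < / INR (S n)}).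
  { intros N n. apply constructive_indefinite_description. apply Hy.
    apply Rinv_0_lt_compat. apply lt_0_INR. lia. }
  set (phi := fix phi n := match n with O => proj1_sig (Hp O O) | S k => proj1_sig (Hp (S (phi k)) (S k)) end).
  exists phi. split.
  - intros n. change (phi n < proj1_sig (Hp (S (phi n)) (S n)))%nat.
    pose proof (proj2_sig (Hp (S (phi n)) (S n))) as [hm _]. lia.
  - exists y. intros e he.
    destruct (archimed (/ e)) as [ha _].
    assert (hpos : (0 < up (/ e))%Z). { apply lt_IZR. pose proof (Rinv_0_lt_compat e he). lra. }
    exists (Z.to_nat (up (/ e))). intros n hn.
    assert (Hd : d (s (phi n)) y < / INR (S n)).
    { destruct n; [exact (proj2 (proj2_sig (Hp O O)))|].
      exact (proj2 (proj2_sig (Hp (S (phi n)) (S n)))). }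
    eapply Rlt_le_trans; [exact Hd|].
    replace e with (/ / e) by (apply Rinv_inv). apply Rinv_le_contravar; [apply Rinv_0_lt_compat; lra|].
    apply Rle_trans with (IZR (up (/ e))); [lra|]. rewrite <- (Z2Nat.id (up (/e))) by lia.
    rewrite <- INR_IZR_INZ. apply le_INR. lia.
Qed.

End Basics.

Section Diag.
Context {Y : Type} (d : Y -> Y -> R) (hmet : is_metric d) (hcpt : is_compact_space d).

Lemma incr_ge (phi : nat -> nat) : (forall n, (phi n < phi (S n))%nat) -> forall n, (n <= phi n)%nat.
Proof. intros H n. induction n; [lia|]. specialize (H n). lia. Qed.

Lemma stage (f1 f2 : nat -> nat -> Y) (sg : nat -> nat) (j : nat) :
  exists tau : nat -> nat, (forall n, (tau n < tau (S n))%nat) /\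
   exists y1 y2, conv d (fun n => f1 (sg (tau n)) j) y1 /\ conv d (fun n => f2 (sg (tau n)) j) y2.
Proof.
  destruct (seq_compact d hmet hcpt (fun n => f1 (sg n) j)) as [t1 [ht1 [y1 hy1]]].
  destruct (seq_compact d hmet hcpt (fun n => f2 (sg (t1 n)) j)) as [t2 [ht2 [y2 hy2]]].
  exists (fun n => t1 (t2 n)). split.
  - intros n. specialize (ht2 n). assert (forall a b, (a < b)%nat -> (t1 a < t1 b)%nat).
    { intros a b hab. induction hab. apply ht1. specialize (ht1 m). lia. }
    apply H. exact ht2.
  - exists y1, y2. split; [|exact hy2].
    apply (conv_sub d (fun n => f1 (sg (t1 n)) j) y1 t2 hy1).
    intros N. exists N. intros n hn. pose proof (incr_ge t2 ht2 n). lia.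
Qed.

Lemma diag (f1 f2 : nat -> nat -> Y) : exists psi : nat -> nat, (forall n, (n <= psi n)%nat) /\
  forall j, exists y1 y2, conv d (fun n => f1 (psi n) j) y1 /\ conv d (fun n => f2 (psi n) j) y2.
Proof.
  set (st := fun sg j => proj1_sig (constructive_indefinite_description _ (stage f1 f2 sg j))).
  assert (Hst : forall sg j, (forall n, (st sg j n < st sg j (S n))%nat) /\
      exists y1 y2, conv d (fun n => f1 (sg (st sg j n)) j) y1 /\ conv d (fun n => f2 (sg (st sg j n)) j) y2).
  { intros sg j. exact (proj2_sig (constructive_indefinite_description _ (stage f1 f2 sg j))). }
  set (Sg := fix Sg k := match k with O => fun n : nat => n | S k' => fun n => Sg k' (st (Sg k') k' n) end).
  assert (HR : forall k dd, exists R : nat -> nat, (forall n, (n <= R n)%nat) /\ forall n, Sg (k + dd)%nat n = Sg k (R n)).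
  { intros k dd. induction dd.
    - exists (fun n => n). split; [lia|]. intros n. rewrite Nat.add_0_r. reflexivity.
    - destruct IHdd as [R [hR1 hR2]]. exists (fun n => R (st (Sg (k + dd)%nat) (k + dd)%nat n)). split.
      + intros n. pose proof (incr_ge _ (proj1 (Hst (Sg (k+dd)%nat) (k+dd)%nat)) n).
        specialize (hR1 (st (Sg (k + dd)%nat) (k + dd)%nat n)). lia.
      + intros n. rewrite Nat.add_succ_r. simpl. apply hR2. }
  exists (fun n => Sg (S n) n). split.
  - intros n. destruct (HR O (S n)) as [R [hR1 hR2]]. rewrite hR2. simpl. apply hR1.
  - intros j. destruct (proj2 (Hst (Sg j) j)) as [y1 [y2 [c1 c2]]].
    exists y1, y2. split.
    + intros e he. destruct (c1 e he) as [N HN]. exists (N + j)%nat. intros n hn.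
      destruct (HR (S j) (n - j)%nat) as [R [hR1 hR2]].
      replace (S n) with (S j + (n - j))%nat by lia. rewrite hR2. apply HN.
      specialize (hR1 n). lia.
    + intros e he. destruct (c2 e he) as [N HN]. exists (N + j)%nat. intros n hn.
      destruct (HR (S j) (n - j)%nat) as [R [hR1 hR2]].
      replace (S n) with (S j + (n - j))%nat by lia. rewrite hR2. apply HN.
      specialize (hR1 n). lia.
Qed.

End Diag.

Section LU.
Context {Y : Type} (d : Y -> Y -> R) (hmet : is_metric d) (hcpt : is_compact_space d)
  (g : Y -> Y) (hcont : continuous_map d g).

Lemma it_cont n x : forall eps, eps > 0 -> exists delta, delta > 0 /\
   forall z, d x z < delta -> d (Nat.iter n g x) (Nat.iter n g z) < eps.
Proof.
  induction n; intros e he.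
  - exists e. split; [exact he|]. intros z hz. exact hz.
  - destruct (hcont (Nat.iter n g x) e he) as [d1 [hd1 H1]].
    destruct (IHn d1 hd1) as [d2 [hd2 H2]]. exists d2. split; [exact hd2|].
    intros z hz. simpl. apply H1. apply H2. exact hz.
Qed.

Context (beta : R) (hce : c_expansive d g beta).

Lemma lemmaU : forall eta, eta > 0 -> exists M : nat, forall a b,
   (forall i, (i <= 2 * M)%nat -> d (Nat.iter i g a) (Nat.iter i g b) <= beta / 2) ->
   d (Nat.iter M g a) (Nat.iter M g b) < eta.
Proof.
  intros eta heta. apply NNPP. intros Hno.
  assert (H : forall M : nat, exists p : Y * Y,
     (forall i, (i <= 2 * M)%nat -> d (Nat.iter i g (fst p)) (Nat.iter i g (snd p)) <= beta / 2) /\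
     eta <= d (Nat.iter M g (fst p)) (Nat.iter M g (snd p))).
  { intros M. apply NNPP. intros H1. apply Hno. exists M. intros a b Hab.
    apply Rnot_le_lt. intros H2. apply H1. exists (a, b). simpl. split; assumption. }
  set (P := fun M => proj1_sig (constructive_indefinite_description _ (H M))).
  assert (HP : forall M, (forall i, (i <= 2 * M)%nat -> d (Nat.iter i g (fst (P M))) (Nat.iter i g (snd (P M))) <= beta / 2) /\
     eta <= d (Nat.iter M g (fst (P M))) (Nat.iter M g (snd (P M)))).
  { intros M. exact (proj2_sig (constructive_indefinite_description _ (H M))). }
  set (f1 := fun M j => Nat.iter (M - j) g (fst (P M))).
  set (f2 := fun M j => Nat.iter (M - j) g (snd (P M))).
  destruct (diag d hmet hcpt f1 f2) as [psi [hpsi Hc]].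
  set (a1 := fun j => proj1_sig (constructive_indefinite_description _ (Hc j))).
  assert (Ha1 : forall j, exists y2, conv d (fun n => f1 (psi n) j) (a1 j) /\ conv d (fun n => f2 (psi n) j) y2).
  { intros j. exact (proj2_sig (constructive_indefinite_description _ (Hc j))). }
  assert (Hc2 : forall j, exists y2, conv d (fun n => f2 (psi n) j) y2).
  { intros j. destruct (Ha1 j) as [y2 [_ h]]. exists y2. exact h. }
  set (a2 := fun j => proj1_sig (constructive_indefinite_description _ (Hc2 j))).
  assert (C1 : forall j, conv d (fun n => f1 (psi n) j) (a1 j)).
  { intros j. destruct (Ha1 j) as [y2 [h _]]. exact h. }
  assert (C2 : forall j, conv d (fun n => f2 (psi n) j) (a2 j)).
  { intros j. exact (proj2_sig (constructive_indefinite_description _ (Hc2 j))). }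
  assert (B1 : forall j, g (a1 (S j)) = a1 j).
  { intros j. eapply conv_unique; [exact hmet| |apply C1].
    apply (conv_ext d (fun n => g (f1 (psi n) (S j)))).
    - apply conv_map; [exact hmet| |apply C1]. apply hcont.
    - exists (S j). intros n hn. unfold f1. specialize (hpsi n).
      replace (psi n - j)%nat with (S (psi n - S j)) by lia. reflexivity. }
  assert (B2 : forall j, g (a2 (S j)) = a2 j).
  { intros j. eapply conv_unique; [exact hmet| |apply C2].
    apply (conv_ext d (fun n => g (f2 (psi n) (S j)))).
    - apply conv_map; [exact hmet| |apply C2]. apply hcont.
    - exists (S j). intros n hn. unfold f2. specialize (hpsi n).
      replace (psi n - j)%nat with (S (psi n - S j)) by lia. reflexivity. }
  assert (D1 : forall j, d (a1 j) (a2 j) <= beta / 2).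
  { intros j. apply (conv_le d hmet _ _ _ _ _ (C1 j) (C2 j)). exists O. intros n _.
    unfold f1, f2. apply (proj1 (HP (psi n))). lia. }
  assert (D2 : forall t, d (Nat.iter t g (a1 O)) (Nat.iter t g (a2 O)) <= beta / 2).
  { intros t. apply (conv_le d hmet (fun n => Nat.iter t g (f1 (psi n) O)) (fun n => Nat.iter t g (f2 (psi n) O))).
    - apply conv_map; [exact hmet| |apply C1]. apply it_cont.
    - apply conv_map; [exact hmet| |apply C2]. apply it_cont.
    - exists t. intros n hn. unfold f1, f2. rewrite <- !Nat.iter_add. specialize (hpsi n).
      apply (proj1 (HP (psi n))). lia. }
  assert (D3 : eta <= d (a1 O) (a2 O)).
  { apply (conv_ge d hmet _ _ _ _ _ (C1 O) (C2 O)). exists O. intros n _. unfold f1, f2.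
    rewrite Nat.sub_0_r. apply (proj2 (HP (psi n))). }
  set (x := fun t : Z => if (t <? 0)%Z then a1 (Z.to_nat (- t)) else Nat.iter (Z.to_nat t) g (a1 O)).
  set (y := fun t : Z => if (t <? 0)%Z then a2 (Z.to_nat (- t)) else Nat.iter (Z.to_nat t) g (a2 O)).
  assert (FO : forall (a : nat -> Y), (forall j, g (a (S j)) = a j) ->
     full_orbit g (fun t : Z => if (t <? 0)%Z then a (Z.to_nat (- t)) else Nat.iter (Z.to_nat t) g (a O))).
  { intros a Ha t. destruct (Z.ltb_spec t 0) as [h1|h1]; destruct (Z.ltb_spec (t + 1) 0) as [h2|h2].
    - replace (Z.to_nat (- t)) with (S (Z.to_nat (- (t + 1)))) by lia. apply Ha.
    - assert (t = -1)%Z by lia. subst t. simpl. apply (Ha O).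
    - lia.
    - replace (Z.to_nat (t + 1)) with (S (Z.to_nat t)) by lia. reflexivity. }
  destruct hce as [hb Hce].
  destruct (Hce x y (FO a1 B1) (FO a2 B2)) as [n Hn].
  - unfold x, y. simpl. intros E. rewrite E, d_refl in D3 by exact hmet. lra.
  - unfold x, y in Hn. destruct (n <? 0)%Z.
    + specialize (D1 (Z.to_nat (- n))). lra.
    + specialize (D2 (Z.to_nat n)). lra.
Qed.

End LU.

Section Trace.
Context {Y : Type} (d : Y -> Y -> R) (hmet : is_metric d) (hcpt : is_compact_space d)
  (g : Y -> Y) (hcont : continuous_map d g) (y0 : Y)
  (beta e delta : R) (hce : c_expansive d g beta) (he : e > 0) (he2 : 2 * e <= beta / 2)
  (Hsh : forall x : nat -> Y, (forall i, d (g (x i)) (x (S i)) < delta) ->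
      exists z, forall i, d (Nat.iter i g z) (x i) < e).

Definition pseudo (X : Z -> Y) : Prop := forall t, d (g (X t)) (X (t + 1)%Z) < delta.

Definition tr (X : Z -> Y) (k : nat) : Y :=
  epsilon (inhabits y0) (fun z => forall i : nat, d (Nat.iter i g z) (X (Z.of_nat i - Z.of_nat k)%Z) < e).

Lemma tr_spec X : pseudo X -> forall k i, d (Nat.iter i g (tr X k)) (X (Z.of_nat i - Z.of_nat k)%Z) < e.
Proof.
  intros HX k. unfold tr. apply epsilon_spec.
  apply (Hsh (fun i => X (Z.of_nat i - Z.of_nat k)%Z)). intros i.
  replace (Z.of_nat (S i) - Z.of_nat k)%Z with ((Z.of_nat i - Z.of_nat k) + 1)%Z by lia. apply HX.
Qed.

Definition LU (M : nat) (eta : R) : Prop := forall a b,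
   (forall i, (i <= 2 * M)%nat -> d (Nat.iter i g a) (Nat.iter i g b) <= beta / 2) ->
   d (Nat.iter M g a) (Nat.iter M g b) < eta.

Definition appr (X : Z -> Y) (k : nat) : Y := Nat.iter k g (tr X k).

Lemma appr_close X X' M eta : pseudo X -> pseudo X' -> LU M eta ->
  (forall t, (- Z.of_nat M <= t <= Z.of_nat M)%Z -> X t = X' t) ->
  forall k k', (k >= M)%nat -> (k' >= M)%nat -> d (appr X k) (appr X' k') < eta.
Proof.
  intros HX HX' HM Heq k k' hk hk'. unfold appr.
  assert (E : forall k Z, (k >= M)%nat -> Nat.iter k g Z = Nat.iter M g (Nat.iter (k - M) g Z)).
  { intros k0 Z h. rewrite <- Nat.iter_add. f_equal. lia. }
  rewrite (E k) by exact hk. rewrite (E k') by exact hk'.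
  apply HM. intros i hi. rewrite <- !Nat.iter_add.
  pose proof (tr_spec X HX k (i + (k - M))) as h1.
  pose proof (tr_spec X' HX' k' (i + (k' - M))) as h2.
  replace (Z.of_nat (i + (k - M)) - Z.of_nat k)%Z with (Z.of_nat i - Z.of_nat M)%Z in h1 by lia.
  replace (Z.of_nat (i + (k' - M)) - Z.of_nat k')%Z with (Z.of_nat i - Z.of_nat M)%Z in h2 by lia.
  rewrite Heq in h1 by lia.
  pose proof (d_tri d hmet (Nat.iter (i + (k - M)) g (tr X k)) (X' (Z.of_nat i - Z.of_nat M)%Z)
     (Nat.iter (i + (k' - M)) g (tr X' k'))). rewrite (d_sym d hmet (X' _)) in H. lra.
Qed.

Lemma appr_orbit X a0 M eta : pseudo X -> LU M eta ->
  (forall t, (- Z.of_nat M <= t <= Z.of_nat M)%Z -> X t = Nat.iter (Z.to_nat (t + Z.of_nat M)) g a0) ->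
  forall k, (k >= M)%nat -> d (appr X k) (Nat.iter M g a0) < eta.
Proof.
  intros HX HM Heq k hk. unfold appr.
  assert (E : forall Z, Nat.iter k g Z = Nat.iter M g (Nat.iter (k - M) g Z)).
  { intros Z. rewrite <- Nat.iter_add. f_equal. lia. }
  rewrite !E.
  apply HM. intros i hi. rewrite <- !Nat.iter_add.
  pose proof (tr_spec X HX k (i + (k - M))) as h1.
  replace (Z.of_nat (i + (k - M)) - Z.of_nat k)%Z with (Z.of_nat i - Z.of_nat M)%Z in h1 by lia.
  rewrite Heq in h1 by lia. replace (Z.to_nat (Z.of_nat i - Z.of_nat M + Z.of_nat M)) with i in h1 by lia.
  lra.
Qed.

Lemma appr_cauchy X : pseudo X -> exists y, conv d (appr X) y.
Proof.
  intros HX. apply (cauchy_conv d hmet hcpt). intros eta heta.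
  destruct (lemmaU d hmet hcpt g hcont beta hce eta heta) as [M HM].
  exists M. intros n m hn hm. apply (appr_close X X M eta HX HX HM); auto.
Qed.

Definition hpt (X : Z -> Y) : Y := epsilon (inhabits y0) (fun y => conv d (appr X) y).

Lemma hpt_spec X : pseudo X -> conv d (appr X) (hpt X).
Proof. intros HX. unfold hpt. apply epsilon_spec. apply appr_cauchy. exact HX. Qed.

Lemma hpt_trace X : pseudo X -> forall t : nat, d (Nat.iter t g (hpt X)) (X (Z.of_nat t)) <= e.
Proof.
  intros HX t. apply (conv_const_le d hmet (fun n => Nat.iter t g (appr X n))).
  - apply conv_map; [exact hmet| |apply hpt_spec; exact HX]. apply (it_cont d g hcont).
  - exists O. intros n _. unfold appr. rewrite <- Nat.iter_add.
    pose proof (tr_spec X HX n (t + n)). replace (Z.of_nat (t + n) - Z.of_nat n)%Z with (Z.of_nat t) in H by lia. lra.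
Qed.

Lemma hpt_close X X' M eta : pseudo X -> pseudo X' -> LU M eta ->
  (forall t, (- Z.of_nat M <= t <= Z.of_nat M)%Z -> X t = X' t) -> d (hpt X) (hpt X') <= eta.
Proof.
  intros HX HX' HM Heq. apply (conv_le d hmet (appr X) (appr X')); try (apply hpt_spec; assumption).
  exists M. intros n hn. left. apply (appr_close X X' M eta); auto.
Qed.

Lemma hpt_orbit X a0 M eta : pseudo X -> LU M eta ->
  (forall t, (- Z.of_nat M <= t <= Z.of_nat M)%Z -> X t = Nat.iter (Z.to_nat (t + Z.of_nat M)) g a0) ->
  d (hpt X) (Nat.iter M g a0) <= eta.
Proof.
  intros HX HM Heq. apply (conv_const_le d hmet (appr X)); [apply hpt_spec; exact HX|].
  exists M. intros n hn. left. apply (appr_orbit X a0 M eta); auto.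
Qed.
End Trace.

Section Blocks.
Context {Y : Type} (d : Y -> Y -> R) (g : Y -> Y) (delta : R) (hdelta : delta > 0)
  (L : nat) (hL : (1 <= L)%nat).

Definition Xi (B : Z -> Y) (t : Z) : Y :=
  Nat.iter (Z.to_nat (t mod Z.of_nat L)) g (B (t / Z.of_nat L)%Z).

Lemma Xi_block B k (r : nat) : (r < L)%nat -> Xi B (Z.of_nat L * k + Z.of_nat r)%Z = Nat.iter r g (B k).
Proof.
  intros hr. unfold Xi.
  rewrite <- (Z.div_unique_pos (Z.of_nat L * k + Z.of_nat r) (Z.of_nat L) k (Z.of_nat r)) by lia.
  rewrite <- (Z.mod_unique_pos (Z.of_nat L * k + Z.of_nat r) (Z.of_nat L) k (Z.of_nat r)) by lia.
  rewrite ?Nat2Z.id. reflexivity.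
Qed.

Lemma Xi_block0 B k : Xi B (Z.of_nat L * k)%Z = B k.
Proof. pose proof (Xi_block B k 0 ltac:(lia)). rewrite Z.add_0_r in H. exact H. Qed.

Lemma Xi_pseudo B (hm : is_metric d) : (forall k, d (Nat.iter L g (B k)) (B (k + 1)%Z) < delta) ->
  forall t, d (g (Xi B t)) (Xi B (t + 1)%Z) < delta.
Proof.
  intros HB t.
  pose proof (Z.div_mod t (Z.of_nat L) ltac:(lia)) as E.
  pose proof (Z.mod_pos_bound t (Z.of_nat L) ltac:(lia)) as Hb.
  set (q := (t / Z.of_nat L)%Z) in *. set (r := (t mod Z.of_nat L)%Z) in *.
  assert (Ht : t = (Z.of_nat L * q + Z.of_nat (Z.to_nat r))%Z) by lia.
  rewrite Ht. rewrite Xi_block by lia.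
  destruct (Z.eq_dec (r + 1) (Z.of_nat L)) as [h|h].
  - replace (Z.of_nat L * q + Z.of_nat (Z.to_nat r) + 1)%Z with (Z.of_nat L * (q + 1) + Z.of_nat 0)%Z by lia.
    rewrite Xi_block by lia. simpl.
    replace (g (Nat.iter (Z.to_nat r) g (B q))) with (Nat.iter L g (B q)).
    + apply HB.
    + transitivity (Nat.iter (S (Z.to_nat r)) g (B q)); [f_equal; lia|reflexivity].
  - replace (Z.of_nat L * q + Z.of_nat (Z.to_nat r) + 1)%Z with (Z.of_nat L * q + Z.of_nat (S (Z.to_nat r)))%Z by lia.
    rewrite Xi_block by lia. simpl. rewrite (d_refl d hm). lra.
Qed.

End Blocks.

Definition sl (j : nat) : nat := (16 * (j + 1) * (j + 1))%nat.

Lemma sl_mono j j' : (j < j')%nat -> (sl j + 48 <= sl j')%nat.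
Proof. intros h. unfold sl. nia. Qed.

Lemma sl_ge j : (j <= sl j)%nat.
Proof. unfold sl. nia. Qed.

Lemma sl_uniq j j' K : (sl j <= K < sl j + 4)%nat -> (sl j' <= K < sl j' + 4)%nat -> j = j'.
Proof.
  intros h1 h2. destruct (Nat.lt_trichotomy j j') as [h|[h|h]]; auto.
  - pose proof (sl_mono _ _ h). lia.
  - pose proof (sl_mono _ _ h). lia.
Qed.

Definition bit (c : nat) (w : nat -> bool) (j : nat) : bool :=
  let p := Cantor.of_nat j in
  if Nat.even (fst p) then w (Nat.div2 (fst p)) else Nat.eqb (Nat.div2 (fst p)) c.

Lemma of_nat_fst_le j : (fst (Cantor.of_nat j) <= j)%nat.
Proof.
  pose proof (Cantor.cancel_to_of j). destruct (Cantor.of_nat j) as [a b] eqn:E. simpl.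
  pose proof (Cantor.to_nat_non_decreasing a b). lia.
Qed.

Definition jsel (K : nat) : nat := epsilon (inhabits 0%nat) (fun j => (sl j <= K < sl j + 4)%nat).

Lemma jsel_spec K j : (sl j <= K < sl j + 4)%nat -> jsel K = j.
Proof.
  intros h. assert (H : (sl (jsel K) <= K < sl (jsel K) + 4)%nat).
  { unfold jsel. apply epsilon_spec. exists j. exact h. }
  apply (sl_uniq _ _ K H h).
Qed.

Section Constr.
Context {Y : Type} (d : Y -> Y -> R) (hmet : is_metric d) (g : Y -> Y)
  (delta : R) (hdelta : delta > 0) (L : nat) (hL : (1 <= L)%nat)
  (u q1 rho gam kap : Y)
  (hr1 : d u rho < delta / 2) (hr2 : d u (Nat.iter L g rho) < delta / 2)
  (hg1 : d u gam < delta / 2) (hg2 : d q1 (Nat.iter L g gam) < delta / 2)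
  (hk1 : d q1 kap < delta / 2) (hk2 : d u (Nat.iter L g kap) < delta / 2)
  (A C1 C2 : nat -> nat) (zin a0 zout : nat -> Y)
  (hA : forall c, (1 <= A c)%nat) (hC1 : forall c, (1 <= C1 c)%nat) (hC2 : forall c, (1 <= C2 c)%nat)
  (hzi1 : forall c, d u (zin c) < delta / 2)
  (hzi2 : forall c, d (a0 c) (Nat.iter (C1 c * L) g (zin c)) < delta / 2)
  (hzo1 : forall c, d (Nat.iter (2 * A c * L) g (a0 c)) (zout c) < delta / 2)
  (hzo2 : forall c, d u (Nat.iter (C2 c * L) g (zout c)) < delta / 2).

Definition slotval (p : nat) (b : bool) : Y :=
  match p with O => gam | 1%nat => kap | 2%nat => if b then gam else rho | _ => if b then kap else rho end.

Definition En (c : nat) : nat := (A c + C2 c)%nat.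

Definition Bl (c : nat) (w : nat -> bool) (k : Z) : Y :=
  if (k <? - Z.of_nat (A c + C1 c))%Z then rho
  else if (k <? - Z.of_nat (A c))%Z then Nat.iter (Z.to_nat (k + Z.of_nat (A c + C1 c)) * L) g (zin c)
  else if (k <? Z.of_nat (A c))%Z then Nat.iter (Z.to_nat (k + Z.of_nat (A c)) * L) g (a0 c)
  else if (k <? Z.of_nat (En c))%Z then Nat.iter (Z.to_nat (k - Z.of_nat (A c)) * L) g (zout c)
  else let K := Z.to_nat k in let j := jsel K in
    if (En c <=? sl j)%nat && (sl j <=? K)%nat && (K <? sl j + 4)%nat then slotval (K - sl j) (bit c w j) else rho.

Lemma Bl_slot c w j K : (En c <= sl j)%nat -> (sl j <= K < sl j + 4)%nat ->
  Bl c w (Z.of_nat K) = slotval (K - sl j) (bit c w j).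
Proof.
  intros h1 h2. unfold Bl, En in *.
  destruct (Z.ltb_spec (Z.of_nat K) (- Z.of_nat (A c + C1 c))); [lia|].
  destruct (Z.ltb_spec (Z.of_nat K) (- Z.of_nat (A c))); [lia|].
  destruct (Z.ltb_spec (Z.of_nat K) (Z.of_nat (A c))); [lia|].
  destruct (Z.ltb_spec (Z.of_nat K) (Z.of_nat (A c + C2 c))); [lia|].
  rewrite Nat2Z.id. rewrite (jsel_spec K j h2).
  replace ((A c + C2 c <=? sl j)%nat && (sl j <=? K)%nat && (K <? sl j + 4)%nat) with true; [reflexivity|].
  symmetry. apply andb_true_iff; split; [apply andb_true_iff; split|]; apply Nat.leb_le || apply Nat.ltb_lt; lia.
Qed.

Lemma Bl_rho c w K : (En c <= K)%nat -> (forall j, (En c <= sl j)%nat -> ~ (sl j <= K < sl j + 4)%nat) ->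
  Bl c w (Z.of_nat K) = rho.
Proof.
  intros h1 h2. unfold Bl, En in *.
  destruct (Z.ltb_spec (Z.of_nat K) (- Z.of_nat (A c + C1 c))); [lia|].
  destruct (Z.ltb_spec (Z.of_nat K) (- Z.of_nat (A c))); [lia|].
  destruct (Z.ltb_spec (Z.of_nat K) (Z.of_nat (A c))); [lia|].
  destruct (Z.ltb_spec (Z.of_nat K) (Z.of_nat (A c + C2 c))); [lia|].
  rewrite Nat2Z.id.
  destruct ((A c + C2 c <=? sl (jsel K))%nat && (sl (jsel K) <=? K)%nat && (K <? sl (jsel K) + 4)%nat) eqn:E; [|reflexivity].
  exfalso. apply andb_true_iff in E as [E E3]. apply andb_true_iff in E as [E1 E2].
  apply Nat.leb_le in E1, E2. apply Nat.ltb_lt in E3. apply (h2 (jsel K)); [exact E1|lia].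
Qed.


Lemma link_u V V' : d u (Nat.iter L g V) < delta / 2 -> d u V' < delta / 2 -> d (Nat.iter L g V) V' < delta.
Proof. intros h1 h2. pose proof (d_tri d hmet (Nat.iter L g V) u V'). rewrite (d_sym d hmet _ u) in H. lra. Qed.
Lemma link_q V V' : d q1 (Nat.iter L g V) < delta / 2 -> d q1 V' < delta / 2 -> d (Nat.iter L g V) V' < delta.
Proof. intros h1 h2. pose proof (d_tri d hmet (Nat.iter L g V) q1 V'). rewrite (d_sym d hmet _ q1) in H. lra. Qed.
Lemma link_eq V V' : Nat.iter L g V = V' -> d (Nat.iter L g V) V' < delta.
Proof. intros h. rewrite h, (d_refl d hmet). lra. Qed.

Lemma chain_slot c w K : (En c <= K)%nat ->
  d (Nat.iter L g (Bl c w (Z.of_nat K))) (Bl c w (Z.of_nat (S K))) < delta.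
Proof.
  intros hK.
  destruct (classic (exists j, (En c <= sl j)%nat /\ (sl j <= S K < sl j + 4)%nat)) as [[j [hj1 hj2]]|hno].
  - rewrite (Bl_slot c w j (S K) hj1 hj2).
    destruct (Nat.eq_dec (S K) (sl j)) as [e0|e0].
    + rewrite e0, Nat.sub_diag. simpl.
      rewrite Bl_rho; [apply link_u; assumption|lia|].
      intros j' hj' hin. destruct (Nat.lt_trichotomy j' j) as [h|[h|h]].
      * pose proof (sl_mono _ _ h). lia.
      * subst. lia.
      * pose proof (sl_mono _ _ h). lia.
    + rewrite (Bl_slot c w j K hj1) by lia.
      destruct (K - sl j)%nat as [|[|[|p]]] eqn:Ep; replace (S K - sl j)%nat with (S (K - sl j)) by lia; rewrite Ep; simpl.
      * apply link_q; assumption.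
      * destruct (bit c w j); apply link_u; assumption.
      * destruct (bit c w j); [apply link_q|apply link_u]; assumption.
      * lia.
  - rewrite (Bl_rho c w (S K)); [|lia|].
    2:{ intros j hj hin. apply hno. exists j. split; assumption. }
    destruct (classic (exists j, (En c <= sl j)%nat /\ (sl j <= K < sl j + 4)%nat)) as [[j [hj1 hj2]]|hno2].
    + rewrite (Bl_slot c w j K hj1 hj2).
      assert (K - sl j = 3)%nat.
      { destruct (Nat.eq_dec (K - sl j) 3); [assumption|]. exfalso. apply hno. exists j. split; [assumption|lia]. }
      rewrite H. simpl. destruct (bit c w j); apply link_u; assumption.
    + rewrite (Bl_rho c w K); [apply link_u; assumption|lia|].
      intros j hj hin. apply hno2. exists j. split; assumption.
Qed.

Lemma iterLmul n V : Nat.iter L g (Nat.iter (n * L) g V) = Nat.iter (S n * L) g V.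
Proof. rewrite <- Nat.iter_add. f_equal; lia. Qed.

Lemma chain c w k : d (Nat.iter L g (Bl c w k)) (Bl c w (k + 1)%Z) < delta.
Proof.
  pose proof (hA c). pose proof (hC1 c). pose proof (hC2 c).
  destruct (Z_lt_le_dec k (Z.of_nat (En c))) as [hk|hk].
  2:{ replace k with (Z.of_nat (Z.to_nat k)) by lia. replace (Z.of_nat (Z.to_nat k) + 1)%Z with (Z.of_nat (S (Z.to_nat k))) by lia.
      apply chain_slot. lia. }
  destruct (Z.eq_dec (k + 1) (Z.of_nat (En c))) as [he|he].
  -
    replace (k + 1)%Z with (Z.of_nat (En c)) by lia.
    assert (Hv : d u (Bl c w (Z.of_nat (En c))) < delta / 2).
    { destruct (classic (exists j, (En c <= sl j)%nat /\ (sl j <= En c < sl j + 4)%nat)) as [[j [hj1 hj2]]|hno].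
      - rewrite (Bl_slot c w j _ hj1 hj2). replace (En c - sl j)%nat with O by lia. simpl. assumption.
      - rewrite Bl_rho; [assumption|lia|]. intros j hj hin. apply hno. exists j. split; assumption. }
    apply link_u; [|exact Hv].
    unfold Bl, En in *.
    destruct (Z.ltb_spec k (- Z.of_nat (A c + C1 c))); [lia|].
    destruct (Z.ltb_spec k (- Z.of_nat (A c))); [lia|].
    destruct (Z.ltb_spec k (Z.of_nat (A c))); [lia|].
    destruct (Z.ltb_spec k (Z.of_nat (A c + C2 c))); [|lia].
    rewrite iterLmul. replace (S (Z.to_nat (k - Z.of_nat (A c)))) with (C2 c) by lia. apply hzo2.
  - unfold Bl, En in *.
    destruct (Z.ltb_spec k (- Z.of_nat (A c + C1 c))) as [h1|h1];
    destruct (Z.ltb_spec (k + 1) (- Z.of_nat (A c + C1 c))) as [h1'|h1']; try lia.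
    + apply link_u; assumption.
    + destruct (Z.ltb_spec (k + 1) (- Z.of_nat (A c))); [|lia].
      replace (Z.to_nat (k + 1 + Z.of_nat (A c + C1 c)) * L)%nat with O by nia. simpl.
      apply link_u; auto.
    + destruct (Z.ltb_spec k (- Z.of_nat (A c))) as [h2|h2];
      destruct (Z.ltb_spec (k + 1) (- Z.of_nat (A c))) as [h2'|h2']; try lia.
      * apply link_eq. rewrite iterLmul. apply (f_equal (fun n => Nat.iter (n * L) g _)). lia.
      * destruct (Z.ltb_spec (k + 1) (Z.of_nat (A c))); [|lia].
        replace (Z.to_nat (k + 1 + Z.of_nat (A c)) * L)%nat with O by nia. simpl.
        rewrite iterLmul. replace (S (Z.to_nat (k + Z.of_nat (A c + C1 c)))) with (C1 c) by lia.
        rewrite (d_sym d hmet). pose proof (hzi2 c). lra.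
      * destruct (Z.ltb_spec k (Z.of_nat (A c))) as [h3|h3];
        destruct (Z.ltb_spec (k + 1) (Z.of_nat (A c))) as [h3'|h3']; try lia.
        -- apply link_eq. rewrite iterLmul. apply (f_equal (fun n => Nat.iter (n * L) g _)). lia.
        -- destruct (Z.ltb_spec (k + 1) (Z.of_nat (A c + C2 c))); [|lia].
           replace (Z.to_nat (k + 1 - Z.of_nat (A c)) * L)%nat with O by nia. simpl.
           rewrite iterLmul. replace (S (Z.to_nat (k + Z.of_nat (A c))) * L)%nat with (2 * A c * L)%nat by nia.
           pose proof (hzo1 c). lra.
        -- destruct (Z.ltb_spec k (Z.of_nat (A c + C2 c))); [|lia].
           destruct (Z.ltb_spec (k + 1) (Z.of_nat (A c + C2 c))); [|lia].
           apply link_eq. rewrite iterLmul. apply (f_equal (fun n => Nat.iter (n * L) g _)). lia.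
Qed.

End Constr.

Section Main.
Context {Y : Type} (d : Y -> Y -> R) (hmet : is_metric d) (hcpt : is_compact_space d)
  (g : Y -> Y) (hcont : continuous_map d g) (y0 : Y)
  (beta e delta : R) (hce : c_expansive d g beta) (he : e > 0) (he2 : 2 * e <= beta / 2)
  (Hsh : forall x : nat -> Y, (forall i, d (g (x i)) (x (S i)) < delta) ->
      exists z, forall i, d (Nat.iter i g z) (x i) < e)
  (hdelta : delta > 0) (hde : delta <= e)
  (L : nat) (hL : (1 <= L)%nat)
  (u q1 rho gam kap : Y) (hsep : 6 * e < d u q1)
  (hr1 : d u rho < delta / 2) (hr2 : d u (Nat.iter L g rho) < delta / 2)
  (hg1 : d u gam < delta / 2) (hg2 : d q1 (Nat.iter L g gam) < delta / 2)
  (hk1 : d q1 kap < delta / 2) (hk2 : d u (Nat.iter L g kap) < delta / 2)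
  (A C1 C2 : nat -> nat) (zin a0 zout : nat -> Y)
  (hA : forall c, (1 <= A c)%nat) (hC1 : forall c, (1 <= C1 c)%nat) (hC2 : forall c, (1 <= C2 c)%nat)
  (hzi1 : forall c, d u (zin c) < delta / 2)
  (hzi2 : forall c, d (a0 c) (Nat.iter (C1 c * L) g (zin c)) < delta / 2)
  (hzo1 : forall c, d (Nat.iter (2 * A c * L) g (a0 c)) (zout c) < delta / 2)
  (hzo2 : forall c, d u (Nat.iter (C2 c * L) g (zout c)) < delta / 2).

Definition BB c w := Bl g L rho gam kap A C1 C2 zin a0 zout c w.
Definition XX c w := Xi g L (BB c w).
Definition hh c w := hpt d g y0 e (XX c w).

Lemma XX_pseudo c w : pseudo d g delta (XX c w).
Proof.
  intros t. apply (Xi_pseudo d g delta hdelta L hL). exact hmet.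
  intros k. apply (chain d hmet g delta hdelta L hL u q1 rho gam kap hr1 hr2 hg1 hg2 hk1 hk2
    A C1 C2 zin a0 zout hA hC1 hC2 hzi1 hzi2 hzo1 hzo2).
Qed.

Lemma trace_block c w K : d (Nat.iter (L * K) g (hh c w)) (BB c w (Z.of_nat K)) <= e.
Proof.
  pose proof (hpt_trace d hmet hcpt g hcont y0 beta e delta hce he2 Hsh (XX c w) (XX_pseudo c w) (L * K)).
  unfold XX in H. rewrite Nat2Z.inj_mul, (Xi_block0 g L hL) in H. exact H.
Qed.

Lemma d_kap_rho : d u q1 - delta < d kap rho.
Proof.
  pose proof (d_tri d hmet u rho q1). pose proof (d_tri d hmet rho kap q1).
  rewrite (d_sym d hmet rho kap) in H0. rewrite (d_sym d hmet kap q1) in H0. lra.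
Qed.

Lemma sep_points c w K c' w' K' : BB c w (Z.of_nat K) = kap -> BB c' w' (Z.of_nat K') = rho ->
  d u q1 / 2 < d (Nat.iter (L * K) g (hh c w)) (Nat.iter (L * K') g (hh c' w')).
Proof.
  intros E1 E2. pose proof (trace_block c w K) as T1. pose proof (trace_block c' w' K') as T2.
  rewrite E1 in T1. rewrite E2 in T2. pose proof d_kap_rho.
  pose proof (d_tri d hmet kap (Nat.iter (L * K) g (hh c w)) rho).
  pose proof (d_tri d hmet (Nat.iter (L * K) g (hh c w)) (Nat.iter (L * K') g (hh c' w')) rho).
  rewrite (d_sym d hmet kap (Nat.iter (L * K) g (hh c w))) in H0. lra.
Qed.


Lemma BB_agree c w w' k : (forall j, (sl j <= Z.to_nat k)%nat -> bit c w j = bit c w' j) -> BB c w k = BB c w' k.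
Proof.
  intros H. unfold BB, Bl.
  destruct (k <? _)%Z; [reflexivity|]. destruct (k <? _)%Z; [reflexivity|].
  destruct (k <? _)%Z; [reflexivity|]. destruct (k <? _)%Z; [reflexivity|].
  simpl.
  destruct ((En A C2 c <=? sl (jsel (Z.to_nat k)))%nat && (sl (jsel (Z.to_nat k)) <=? Z.to_nat k)%nat &&
     (Z.to_nat k <? sl (jsel (Z.to_nat k)) + 4)%nat) eqn:E; [|reflexivity].
  apply andb_true_iff in E as [E _]. apply andb_true_iff in E as [_ E]. apply Nat.leb_le in E.
  rewrite H by exact E. reflexivity.
Qed.

Lemma hh_cont c w : forall eps, eps > 0 -> exists n, forall w', agree_upto n w w' -> d (hh c w) (hh c w') < eps.
Proof.
  intros eps heps. destruct (lemmaU d hmet hcpt g hcont beta hce (eps / 2) ltac:(lra)) as [M HM].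
  exists (S M). intros w' Hag.
  assert (H : d (hh c w) (hh c w') <= eps / 2).
  { apply (hpt_close d hmet hcpt g hcont y0 beta e delta hce he2 Hsh _ _ M (eps / 2)
      (XX_pseudo c w) (XX_pseudo c w') HM).
    intros t ht. unfold XX, Xi. f_equal. apply BB_agree. intros j hj.
    assert (Z.to_nat (t / Z.of_nat L) <= M)%nat.
    { assert (t / Z.of_nat L <= Z.of_nat M)%Z.
      { apply Z.div_le_upper_bound; [lia|]. nia. }
      lia. }
    pose proof (sl_ge j). pose proof (of_nat_fst_le j).
    unfold bit. destruct (Nat.even (fst (Cantor.of_nat j))); [|reflexivity].
    apply Hag. pose proof (Nat.div2_decr (fst (Cantor.of_nat j)) (fst (Cantor.of_nat j)) ltac:(lia)). lia. }
  lra.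
Qed.

Lemma hh_dens c w M eta : LU d g beta M eta -> (M < A c * L)%nat ->
  d (hh c w) (Nat.iter (A c * L) g (a0 c)) <= eta.
Proof.
  intros HM hM.
  replace (Nat.iter (A c * L) g (a0 c)) with (Nat.iter M g (Nat.iter (A c * L - M) g (a0 c))).
  2:{ rewrite <- Nat.iter_add. f_equal. lia. }
  apply (hpt_orbit d hmet hcpt g hcont y0 beta e delta hce he he2 Hsh _ _ M eta (XX_pseudo c w) HM).
  intros t ht. unfold XX, Xi.
  pose proof (Z.div_mod t (Z.of_nat L) ltac:(lia)) as E.
  pose proof (Z.mod_pos_bound t (Z.of_nat L) ltac:(lia)) as Hb.
  set (q := (t / Z.of_nat L)%Z) in *. set (r := (t mod Z.of_nat L)%Z) in *.
  pose proof (hA c).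
  assert (hq1 : (- Z.of_nat (A c) <= q)%Z) by nia.
  assert (hq2 : (q < Z.of_nat (A c))%Z) by nia.
  unfold BB, Bl.
  destruct (Z.ltb_spec q (- Z.of_nat (A c + C1 c))); [lia|].
  destruct (Z.ltb_spec q (- Z.of_nat (A c))); [lia|].
  destruct (Z.ltb_spec q (Z.of_nat (A c))); [|lia].
  rewrite <- !Nat.iter_add. f_equal.
  assert (Z.of_nat (Z.to_nat (q + Z.of_nat (A c)) * L) = (q + Z.of_nat (A c)) * Z.of_nat L)%Z.
  { rewrite Nat2Z.inj_mul. rewrite Z2Nat.id by lia. reflexivity. }
  lia.
Qed.


Definition PP c a w := Nat.iter (8 * L * a) g (hh c w).

Lemma it_PP n c a w : Nat.iter n g (PP c a w) = Nat.iter (n + 8 * L * a) g (hh c w).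
Proof. unfold PP. rewrite Nat.iter_add. reflexivity. Qed.

Lemma sep_time c a w c' a' w' K K' : BB c w (Z.of_nat K) = kap -> BB c' w' (Z.of_nat K') = rho ->
  (8 * a <= K)%nat -> (K + 8 * a' = K' + 8 * a)%nat ->
  d u q1 / 2 < d (Nat.iter (L * (K - 8 * a)) g (PP c a w)) (Nat.iter (L * (K - 8 * a)) g (PP c' a' w')).
Proof.
  intros E1 E2 h1 h2. rewrite !it_PP.
  replace (L * (K - 8 * a) + 8 * L * a)%nat with (L * K)%nat by nia.
  replace (L * (K - 8 * a) + 8 * L * a')%nat with (L * K')%nat by nia.
  apply sep_points; assumption.
Qed.

Lemma codes_differ c w c' w' : (c <> c' \/ w <> w') -> forall J, exists j, (j >= J)%nat /\ bit c w j <> bit c' w' j.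
Proof.
  intros H J. destruct (Nat.eq_dec c c') as [hc|hc].
  - destruct H as [H|H]; [contradiction|]. subst c'.
    assert (exists i, w i <> w' i).
    { apply NNPP. intros hn. apply H. apply functional_extensionality. intros i.
      apply NNPP. intros hi. apply hn. exists i. exact hi. }
    destruct H0 as [i hi]. exists (Cantor.to_nat ((2 * i)%nat, J)). split.
    + pose proof (Cantor.to_nat_non_decreasing (2 * i)%nat J). lia.
    + unfold bit. rewrite Cantor.cancel_of_to. cbn [fst].
      rewrite Nat.even_mul, Nat.div2_double. exact hi.
  - exists (Cantor.to_nat ((2 * c + 1)%nat, J)). split.
    + pose proof (Cantor.to_nat_non_decreasing (2 * c + 1)%nat J). lia.
    + unfold bit. rewrite Cantor.cancel_of_to. cbn [fst].
      replace (Nat.even (2 * c + 1)) with false.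
      2:{ replace (2 * c + 1)%nat with (S (2 * c)) by lia. rewrite Nat.even_succ, Nat.odd_mul. reflexivity. }
      replace (Nat.div2 (2 * c + 1)) with c.
      2:{ replace (2 * c + 1)%nat with (S (2 * c)) by lia. rewrite Nat.div2_succ_double. reflexivity. }
      rewrite Nat.eqb_refl. intros E. symmetry in E. apply Nat.eqb_eq in E. apply hc. exact E.
Qed.

Lemma slotK3 c w j : (En A C2 c <= sl j)%nat ->
  BB c w (Z.of_nat (sl j + 3)) = if bit c w j then kap else rho.
Proof.
  intros h. unfold BB. rewrite (Bl_slot g L hL rho gam kap A C1 C2 zin a0 zout c w j) by (auto; lia).
  replace (sl j + 3 - sl j)%nat with 3%nat by lia. reflexivity.
Qed.

Lemma LS_same c a w c' w' : (c <> c' \/ w <> w') -> forall N, exists n, (n >= N)%nat /\ d u q1 / 2 < d (Nat.iter n g (PP c a w)) (Nat.iter n g (PP c' a w')).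
Proof.
  intros H N. destruct (codes_differ c w c' w' H (N + 8 * a + En A C2 c + En A C2 c')) as [j [hj hb]].
  pose proof (sl_ge j).
  exists (L * (sl j + 3 - 8 * a))%nat. split; [nia|].
  pose proof (slotK3 c w j ltac:(lia)) as E1. pose proof (slotK3 c' w' j ltac:(lia)) as E2.
  destruct (bit c w j); destruct (bit c' w' j); try congruence.
  - apply (sep_time c a w c' a w' (sl j + 3) (sl j + 3)); auto; lia.
  - rewrite (d_sym d hmet (Nat.iter _ g (PP c a w))). apply (sep_time c' a w' c a w (sl j + 3) (sl j + 3)); auto; lia.
Qed.

Lemma sl_gap_lo j j' : (j' < j)%nat -> (sl j' + 32 * j + 16 <= sl j)%nat.
Proof. intros h. unfold sl. nia. Qed.
Lemma sl_gap_hi j j' : (j < j')%nat -> (sl j + 32 * j + 48 <= sl j')%nat.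
Proof. intros h. unfold sl. nia. Qed.

Lemma LS_diff c a w c' a' w' : a <> a' -> forall N, exists n, (n >= N)%nat /\ d u q1 / 2 < d (Nat.iter n g (PP c a w)) (Nat.iter n g (PP c' a' w')).
Proof.
  intros H N. set (j := (N + 8 * a + 8 * a' + En A C2 c + En A C2 c' + 1)%nat).
  pose proof (sl_ge j).
  exists (L * (sl j + 1 - 8 * a))%nat. split; [nia|].
  apply (sep_time c a w c' a' w' (sl j + 1) (sl j + 1 + 8 * a' - 8 * a)); [| |lia|lia].
  - unfold BB. rewrite (Bl_slot g L hL rho gam kap A C1 C2 zin a0 zout c w j) by (unfold j in *; lia).
    replace (sl j + 1 - sl j)%nat with 1%nat by lia. reflexivity.
  - unfold BB. apply (Bl_rho g L hL rho gam kap A C1 C2 zin a0 zout c' w'); [unfold j in *; lia|].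
    intros j'' _ hin. destruct (Nat.lt_trichotomy j'' j) as [h|[h|h]].
    + pose proof (sl_gap_lo j j'' h). unfold j in *. lia.
    + subst j''. lia.
    + pose proof (sl_gap_hi j j'' h). unfold j in *. lia.
Qed.

Lemma XX_at c w a s : XX c w (Z.of_nat (s + 8 * L * a)) = Nat.iter (s mod L) g (BB c w (Z.of_nat (s / L + 8 * a))).
Proof.
  unfold XX. rewrite <- (Xi_block g L hL (BB c w)) by (apply Nat.mod_upper_bound; lia).
  f_equal. pose proof (Nat.div_mod s L ltac:(lia)). rewrite Nat2Z.inj_add, Nat2Z.inj_mul. nia.
Qed.

Lemma SY c a w c' a' w' eta : eta > 0 ->
  syndetic (fun n => d (Nat.iter n g (PP c a w)) (Nat.iter n g (PP c' a' w')) < eta).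
Proof.
  intros heta. destruct (lemmaU d hmet hcpt g hcont beta hce eta heta) as [M HM].
  set (R := (M + L * (8 * a + 8 * a' + 8))%nat).
  set (J0 := (4 * R + 4)%nat).
  set (T0 := (L * sl J0 + R + 1 + M + L * (En A C2 c + En A C2 c' + 1))%nat).
  intros Aset HA. destruct (HA (T0 + 2 * R + 2)%nat) as [m Hm].
  destruct (good_point (fun j => L * sl j)%nat R T0 J0) with (m := m) as [t [ht1 [ht2 ht3]]].
  - intros j j' h. pose proof (sl_mono j j' h). nia.
  - intros j hj. pose proof (sl_gap_hi j (S j) ltac:(lia)). unfold J0 in hj. nia.
  - unfold T0. lia.
  - exists t. split; [|replace t with (m + (t - m))%nat by lia; apply Hm; lia].
    replace t with (M + (t - M))%nat by (unfold T0 in ht2; lia).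
    rewrite !Nat.iter_add. apply HM. intros i hi. rewrite <- !Nat.iter_add.
    set (s := (i + (t - M))%nat).
    rewrite !it_PP.
    pose proof (hpt_trace d hmet hcpt g hcont y0 beta e delta hce he2 Hsh (XX c w) (XX_pseudo c w) (s + 8 * L * a)) as T1.
    pose proof (hpt_trace d hmet hcpt g hcont y0 beta e delta hce he2 Hsh (XX c' w') (XX_pseudo c' w') (s + 8 * L * a')) as T2.
    fold (hh c w) in T1. fold (hh c' w') in T2.
    rewrite XX_at in T1, T2.
    assert (HK : forall cc ww aa, (aa = a \/ aa = a') -> (cc = c \/ cc = c') ->
       BB cc ww (Z.of_nat (s / L + 8 * aa)) = rho).
    { intros cc ww aa haa hcc.
      pose proof (Nat.div_mod s L ltac:(lia)) as Es. pose proof (Nat.mod_upper_bound s L ltac:(lia)) as Em.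
      set (K := (s / L)%nat) in *. set (r := (s mod L)%nat) in *.
      unfold BB. apply (Bl_rho g L hL rho gam kap A C1 C2 zin a0 zout cc ww).
      - assert (L * (En A C2 c + En A C2 c' + 1) <= s)%nat by (unfold T0, s in *; lia).
        destruct hcc; subst cc; nia.
      - intros j _ hin. specialize (ht3 j).
        assert (L * sl j <= L * K + 8 * L * aa /\ L * K + 8 * L * aa < L * sl j + 4 * L)%nat by nia.
        unfold s, R in *. destruct haa; subst aa; nia. }
    rewrite (HK c w a) in T1 by auto. rewrite (HK c' w' a') in T2 by auto.
    replace ((s + 8 * L * a) mod L)%nat with (s mod L) in T1.
    2:{ replace (s + 8 * L * a)%nat with (s + (8 * a) * L)%nat by lia. rewrite Nat.Div0.mod_add. reflexivity. }
    replace ((s + 8 * L * a') mod L)%nat with (s mod L) in T2.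
    2:{ replace (s + 8 * L * a')%nat with (s + (8 * a') * L)%nat by lia. rewrite Nat.Div0.mod_add. reflexivity. }
    pose proof (d_tri d hmet (Nat.iter (s + 8 * L * a) g (hh c w)) (Nat.iter (s mod L) g rho) (Nat.iter (s + 8 * L * a') g (hh c' w'))).
    rewrite (d_sym d hmet (Nat.iter (s mod L) g rho)) in H. lra.
Qed.


Context (eta : nat -> R) (Mf : nat -> nat) (hLU : forall c, LU d g beta (Mf c) (eta c))
  (hMA : forall c, (Mf c < A c * L)%nat)
  (hden : forall x r, r > 0 -> exists c, d x (Nat.iter (A c * L) g (a0 c)) + eta c < r).

Lemma bit_sep c a w w' i : w i <> w' i ->
  let j := Cantor.to_nat ((2 * i)%nat, (8 * a + En A C2 c + 1)%nat) in
  d u q1 / 2 < d (Nat.iter (L * (sl j + 3 - 8 * a)) g (PP c a w)) (Nat.iter (L * (sl j + 3 - 8 * a)) g (PP c a w')).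
Proof.
  intros hi j.
  assert (hj : (j >= 8 * a + En A C2 c + 1)%nat).
  { pose proof (Cantor.to_nat_non_decreasing (2 * i)%nat (8 * a + En A C2 c + 1)%nat). unfold j. lia. }
  pose proof (sl_ge j).
  assert (hb : forall ww, bit c ww j = ww i).
  { intros ww. unfold bit, j. rewrite Cantor.cancel_of_to. cbn [fst]. rewrite Nat.even_mul, Nat.div2_double. reflexivity. }
  pose proof (slotK3 c w j ltac:(lia)) as E1.
  pose proof (slotK3 c w' j ltac:(lia)) as E2.
  rewrite hb in E1, E2.
  destruct (w i); destruct (w' i); try congruence.
  - apply (sep_time c a w c a w' (sl j + 3) (sl j + 3)); auto; lia.
  - rewrite (d_sym d hmet (Nat.iter _ g (PP c a w))).
    apply (sep_time c a w' c a w (sl j + 3) (sl j + 3)); auto; lia.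
Qed.

Lemma fin_min (Q : nat -> R -> Prop) : (forall i dl dl', 0 < dl' <= dl -> Q i dl -> Q i dl') ->
  (forall i, exists dl, dl > 0 /\ Q i dl) ->
  forall n, exists dl, dl > 0 /\ forall i, (i < n)%nat -> Q i dl.
Proof.
  intros Hm H n. induction n.
  - exists 1. split; [lra|]. intros i hi. lia.
  - destruct IHn as [d1 [hd1 H1]]. destruct (H n) as [d2 [hd2 H2]].
    assert (0 < Rmin d1 d2) by (apply Rmin_pos; assumption).
    exists (Rmin d1 d2). split; [assumption|].
    intros i hi. destruct (Nat.eq_dec i n) as [->|hne].
    + apply (Hm n d2); [split; [assumption|apply Rmin_r]|exact H2].
    + apply (Hm i d1); [split; [assumption|apply Rmin_l]|apply H1; lia].
Qed.

Lemma PP_cantor c a : cantor_set d (fun y => exists w, y = PP c a w).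
Proof.
  exists (PP c a). split; [intros w; exists w; reflexivity|].
  split; [intros y [w hw]; exists w; symmetry; exact hw|].
  assert (Hinv : forall w n, exists dl, dl > 0 /\ forall w', d (PP c a w) (PP c a w') < dl -> agree_upto n w w').
  { intros w n.
    destruct (fin_min (fun i dl => forall w', d (PP c a w) (PP c a w') < dl -> w i = w' i)) with (n := n)
      as [dl [hdl Hdl]].
    - intros i dl dl' h1 h2 w' h3. apply h2. lra.
    - intros i. set (j := Cantor.to_nat ((2 * i)%nat, (8 * a + En A C2 c + 1)%nat)).
      destruct (it_cont d g hcont (L * (sl j + 3 - 8 * a)) (PP c a w) (d u q1 / 2)) as [dl [hdl Hdl]].
      { pose proof (d_nn d hmet u q1). lra. }
      exists dl. split; [exact hdl|]. intros w' hw'.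
      destruct (Bool.bool_dec (w i) (w' i)) as [E|E]; [exact E|].
      pose proof (bit_sep c a w w' i E). cbv zeta in H. fold j in H. specialize (Hdl _ hw'). lra.
    - exists dl. split; [exact hdl|]. intros w' hw' i hi. apply (Hdl i hi w' hw'). }
  split.
  - intros w w' E. apply functional_extensionality. intros i.
    destruct (Hinv w (S i)) as [dl [hdl Hdl]]. apply Hdl; [|lia]. rewrite E, (d_refl d hmet). exact hdl.
  - split; [|exact Hinv].
    intros w eps heps. unfold PP.
    destruct (it_cont d g hcont (8 * L * a) (hh c w) eps heps) as [dl [hdl Hdl]].
    destruct (hh_cont c w dl hdl) as [n Hn]. exists n. intros w' hw'. apply Hdl. apply Hn. exact hw'.
Qed.

Theorem packaged : exists (eps : R) (k : nat) (T : Y -> Prop),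
    eps > 0 /\ (k >= 1)%nat /\
    dense d T /\ mycielski d T /\
    (forall x, T x -> T (Nat.iter k g x)) /\
    syndetically_scrambled d g eps T.
Proof.
  assert (hD : 0 < d u q1) by lra.
  assert (LSany : forall c a w c' a' w', PP c a w <> PP c' a' w' -> forall N, exists n, (n >= N)%nat /\
     d u q1 / 2 < d (Nat.iter n g (PP c a w)) (Nat.iter n g (PP c' a' w'))).
  { intros c a w c' a' w' hne N. destruct (Nat.eq_dec a a') as [<-|ha].
    - apply LS_same. destruct (Nat.eq_dec c c') as [<-|hc]; [|left; exact hc].
      right. intros <-. apply hne. reflexivity.
    - apply LS_diff. exact ha. }
  exists (d u q1 / 2), (8 * L)%nat, (fun y => exists c a w, y = PP c a w).
  split; [lra|]. split; [lia|]. split; [|split; [|split]].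
  - intros x r hr. destruct (hden x r hr) as [c hc]. exists (PP c 0 (fun _ => false)). split.
    + assert (E : PP c 0 (fun _ => false) = hh c (fun _ => false)).
      { unfold PP. rewrite Nat.mul_0_r. reflexivity. }
      rewrite E. pose proof (hh_dens c (fun _ => false) (Mf c) (eta c) (hLU c) (hMA c)).
      pose proof (d_tri d hmet x (Nat.iter (A c * L) g (a0 c)) (hh c (fun _ => false))).
      rewrite (d_sym d hmet (Nat.iter (A c * L) g (a0 c))) in H0. lra.
    + exists c, 0%nat, (fun _ => false). reflexivity.
  - exists (fun m => fun y => exists w, y = PP (fst (Cantor.of_nat m)) (snd (Cantor.of_nat m)) w).
    split; [intros m; apply PP_cantor|].
    intros y. split.
    + intros [c [a [w hw]]]. exists (Cantor.to_nat (c, a)). rewrite Cantor.cancel_of_to. exists w. exact hw.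
    + intros [m [w hw]]. exists (fst (Cantor.of_nat m)), (snd (Cantor.of_nat m)), w. exact hw.
  - intros x [c [a [w ->]]]. exists c, (S a), w. unfold PP. rewrite <- Nat.iter_add. f_equal. lia.
  - split.
    + exists (PP 0 0 (fun _ => false)), (PP 0 0 (fun _ => true)). split; [exists 0%nat, 0%nat, (fun _ => false); reflexivity|].
      split; [exists 0%nat, 0%nat, (fun _ => true); reflexivity|].
      intros E. pose proof (bit_sep 0 0 (fun _ => false) (fun _ => true) 0 ltac:(discriminate)) as H.
      cbv zeta in H. rewrite E, (d_refl d hmet) in H. lra.
    + intros x y [c [a [w ->]]] [c' [a' [w' ->]]] hne. split; [|split].
      * intros eta0 heta0. apply SY. exact heta0.
      * intros Hcv. destruct (Hcv (d u q1 / 2) ltac:(lra)) as [N HN].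
        destruct (LSany c a w c' a' w' hne N) as [n [hn Hn]]. specialize (HN n hn).
        unfold R_dist in HN. rewrite Rminus_0_r, Rabs_pos_eq in HN by apply (d_nn d hmet). lra.
      * intros dl hdl N. destruct (LSany c a w c' a' w' hne N) as [n [hn Hn]]. exists n. split; [exact hn|]. lra.
Qed.

End Main.

Lemma arch_inv r : r > 0 -> exists n : nat, / INR (S n) < r.
Proof.
  intros hr. destruct (archimed (/ r)) as [ha _].
  assert (hpos : (0 < up (/ r))%Z). { apply lt_IZR. pose proof (Rinv_0_lt_compat r hr). lra. }
  exists (Z.to_nat (up (/ r))).
  assert (H : / r < INR (S (Z.to_nat (up (/ r))))).
  { rewrite S_INR. rewrite INR_IZR_INZ. rewrite Z2Nat.id by lia. lra. }
  replace r with (/ / r) at 2 by (apply Rinv_inv).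
  apply Rinv_lt_contravar; [|exact H]. apply Rmult_lt_0_compat; [apply Rinv_0_lt_compat; exact hr|].
  apply lt_0_INR; lia.
Qed.

Theorem corollary4p15 (Y : Type) (d : Y -> Y -> R) (g : Y -> Y)
  (hmet : is_metric d) (hcpt : is_compact_space d)
  (hnontriv : exists a b : Y, a <> b)
  (hTA : TA_map d g) (hmix : mixing d g) :
  exists (eps : R) (k : nat) (T : Y -> Prop),
    eps > 0 /\ (k >= 1)%nat /\
    dense d T /\ mycielski d T /\
    (forall x, T x -> T (Nat.iter k g x)) /\
    syndetically_scrambled d g eps T.
Proof.
  destruct hnontriv as [q0 [q1 hq]].
  destruct hTA as [hcont [hsurj [[beta hce] hsh]]].
  pose proof hce as [hb _].
  assert (hD : 0 < d q0 q1).
  { destruct (Rle_lt_or_eq_dec 0 (d q0 q1) (d_nn d hmet q0 q1)) as [h|h]; [exact h|].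
    exfalso. apply hq. apply (d_eq d hmet). auto. }
  set (e := Rmin (beta / 4) (d q0 q1 / 7)).
  assert (he : e > 0) by (apply Rmin_pos; lra).
  assert (he2 : 2 * e <= beta / 2) by (pose proof (Rmin_l (beta / 4) (d q0 q1 / 7)); unfold e; lra).
  assert (hsep : 6 * e < d q0 q1) by (pose proof (Rmin_r (beta / 4) (d q0 q1 / 7)); unfold e; lra).
  destruct (hsh e he) as [dl0 [hdl0 Hsh0]].
  set (dl := Rmin dl0 e).
  assert (hdl : dl > 0) by (apply Rmin_pos; lra).
  assert (hde : dl <= e) by apply Rmin_r.
  assert (Hsh : forall x : nat -> Y, (forall i, d (g (x i)) (x (S i)) < dl) ->
      exists z, forall i, d (Nat.iter i g z) (x i) < e).
  { intros x hx. apply Hsh0. intros i. eapply Rlt_le_trans; [apply hx|apply Rmin_l]. }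
  assert (mixlem : forall a b, exists N, forall n, (n >= N)%nat -> exists z, d a z < dl / 2 /\ d b (Nat.iter n g z) < dl / 2).
  { intros a b. apply (hmix (fun z => d a z < dl / 2) (fun z => d b z < dl / 2)).
    - apply ball_open; exact hmet.
    - apply ball_open; exact hmet.
    - exists a. rewrite (d_refl d hmet). lra.
    - exists b. rewrite (d_refl d hmet). lra. }
  destruct (mixlem q0 q0) as [N1 HN1]. destruct (mixlem q0 q1) as [N2 HN2].
  destruct (mixlem q1 q0) as [N3 HN3].
  set (L := (N1 + N2 + N3 + 1)%nat).
  assert (hL : (1 <= L)%nat) by (unfold L; lia).
  destruct (HN1 L ltac:(unfold L; lia)) as [rho [hr1 hr2]].
  destruct (HN2 L ltac:(unfold L; lia)) as [gam [hg1 hg2]].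
  destruct (HN3 L ltac:(unfold L; lia)) as [kap [hk1 hk2]].
  (* countable dense set *)
  assert (Hcov : forall n : nat, exists l : list Y, forall y, exists i, In i l /\ d i y < / INR (S n)).
  { intros n. apply (hcpt Y (fun i z => d i z < / INR (S n))).
    - intros i. apply ball_open; exact hmet.
    - intros y. exists y. rewrite (d_refl d hmet). apply Rinv_0_lt_compat. apply lt_0_INR. lia. }
  set (lst := fun n => proj1_sig (constructive_indefinite_description _ (Hcov n))).
  assert (Hlst : forall n y, exists i, In i (lst n) /\ d i y < / INR (S n)).
  { intros n. exact (proj2_sig (constructive_indefinite_description _ (Hcov n))). }
  set (cen := fun c => nth (snd (Cantor.of_nat c)) (lst (fst (Cantor.of_nat c))) q0).
  set (eta := fun c => / INR (S (fst (Cantor.of_nat c)))).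
  assert (HM : forall c, exists M, LU d g beta M (eta c)).
  { intros c. apply (lemmaU d hmet hcpt g hcont beta hce). unfold eta. apply Rinv_0_lt_compat. apply lt_0_INR. lia. }
  set (Mf := fun c => proj1_sig (constructive_indefinite_description _ (HM c))).
  assert (hLU : forall c, LU d g beta (Mf c) (eta c)).
  { intros c. exact (proj2_sig (constructive_indefinite_description _ (HM c))). }
  set (A := fun c => S (Mf c)).
  assert (hA : forall c, (1 <= A c)%nat) by (intros; unfold A; lia).
  assert (hMA : forall c, (Mf c < A c * L)%nat) by (intros; unfold A; nia).
  assert (Hpre : forall y, exists x, g x = y) by exact hsurj.
  set (pre := fun y => proj1_sig (constructive_indefinite_description _ (Hpre y))).
  assert (Hpre' : forall y, g (pre y) = y).
  { intros y. exact (proj2_sig (constructive_indefinite_description _ (Hpre y))). }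
  assert (itpre : forall n y, Nat.iter n g (Nat.iter n pre y) = y).
  { intros n. induction n; intros y; [reflexivity|].
    rewrite Nat.iter_succ_r. rewrite (Nat.iter_succ n _ pre). rewrite Hpre'. apply IHn. }
  set (a0 := fun c => Nat.iter (A c * L) pre (cen c)).
  assert (Ha0 : forall c, Nat.iter (A c * L) g (a0 c) = cen c) by (intros; apply itpre).
  assert (Hin : forall c, exists p : nat * Y, (1 <= fst p)%nat /\ d q0 (snd p) < dl / 2 /\
     d (a0 c) (Nat.iter (fst p * L) g (snd p)) < dl / 2).
  { intros c. destruct (mixlem q0 (a0 c)) as [N HN]. destruct (HN (S N * L)%nat ltac:(nia)) as [z [h1 h2]].
    exists (S N, z). simpl. split; [lia|]. split; assumption. }
  set (pin := fun c => proj1_sig (constructive_indefinite_description _ (Hin c))).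
  assert (Hpin : forall c, (1 <= fst (pin c))%nat /\ d q0 (snd (pin c)) < dl / 2 /\
     d (a0 c) (Nat.iter (fst (pin c) * L) g (snd (pin c))) < dl / 2).
  { intros c. exact (proj2_sig (constructive_indefinite_description _ (Hin c))). }
  assert (Hout : forall c, exists p : nat * Y, (1 <= fst p)%nat /\
     d (Nat.iter (2 * A c * L) g (a0 c)) (snd p) < dl / 2 /\ d q0 (Nat.iter (fst p * L) g (snd p)) < dl / 2).
  { intros c. destruct (mixlem (Nat.iter (2 * A c * L) g (a0 c)) q0) as [N HN].
    destruct (HN (S N * L)%nat ltac:(nia)) as [z [h1 h2]].
    exists (S N, z). simpl. split; [lia|]. split; assumption. }
  set (pout := fun c => proj1_sig (constructive_indefinite_description _ (Hout c))).
  assert (Hpout : forall c, (1 <= fst (pout c))%nat /\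
     d (Nat.iter (2 * A c * L) g (a0 c)) (snd (pout c)) < dl / 2 /\ d q0 (Nat.iter (fst (pout c) * L) g (snd (pout c))) < dl / 2).
  { intros c. exact (proj2_sig (constructive_indefinite_description _ (Hout c))). }
  assert (hden : forall x r, r > 0 -> exists c, d x (Nat.iter (A c * L) g (a0 c)) + eta c < r).
  { intros x r hr. destruct (arch_inv (r / 2) ltac:(lra)) as [n hn].
    destruct (Hlst n x) as [i [hi hdi]]. destruct (In_nth (lst n) i q0 hi) as [k [_ hk]].
    exists (Cantor.to_nat (n, k)). rewrite Ha0. unfold cen, eta. rewrite Cantor.cancel_of_to. cbn [fst snd].
    rewrite hk. rewrite (d_sym d hmet). lra. }
  apply (packaged d hmet hcpt g hcont q0 beta e dl hce he he2 Hsh hdl hde L hL q0 q1 rho gam kap hsep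
    hr1 hr2 hg1 hg2 hk1 hk2 A (fun c => fst (pin c)) (fun c => fst (pout c)) (fun c => snd (pin c)) a0
    (fun c => snd (pout c)) hA (fun c => proj1 (Hpin c)) (fun c => proj1 (Hpout c))
    (fun c => proj1 (proj2 (Hpin c))) (fun c => proj2 (proj2 (Hpin c)))
    (fun c => proj1 (proj2 (Hpout c))) (fun c => proj2 (proj2 (Hpout c))) eta Mf hLU hMA hden).
Qed.
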